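(* Let $w>0$ be a smooth $1$-periodic function with $\int_0^1 w(x)\,dx=1$, and let $Q(y)=y\ln y-y+1$. Then $$\int_0^1 Q(w)\,dx\le \Bigl(\int_0^1 \frac{w_x^2}{w}\,dx\Bigr)^{1/2}.$$ *)

(* Defs.v *)
From Stdlib Require Import Reals.
From Coquelicot Require Import Coquelicot.
Open Scope R_scope.

(* f is smooth (C^infinity) on R: every iterated derivative exists everywhere
   (hence every derivative is also continuous). *)
Definition smooth (f : R -> R) : Prop :=
  forall (n : nat) (x : R), ex_derive (Derive_n f n) x.

Definition periodic1 (f : R -> R) : Prop := forall x : R, f (x + 1) = f x.

Definition Qf (y : R) : R := y * ln y - y + 1.

(* Main.v *)
Require Import Defs.
From Stdlib Require Import Reals Lra.
From Coquelicot Require Import Coquelicot.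
Open Scope R_scope.

Lemma cs_lemma (g : R -> R) a b c :
  a <= b -> b - a <= 1 -> is_RInt g a b c ->
  ex_RInt (fun x => g x ^ 2) a b -> c ^ 2 <= RInt (fun x => g x ^ 2) a b.
Proof.
  intros hab h1 hg he.
  set (I2 := RInt (fun x => g x ^ 2) a b).
  assert (H' := is_RInt_plus _ _ a b _ _ (is_RInt_minus _ _ a b _ _ (RInt_correct _ _ _ he) (is_RInt_scal _ a b (2 * c) _ hg)) (is_RInt_const a b (c ^ 2))).
  assert (H : is_RInt (fun x => (g x - c) ^ 2) a b (I2 - 2 * c * c + (b - a) * c ^ 2)).
  { eapply is_RInt_ext; [|exact H'].
    intros x _. unfold plus, minus, scal, opp; simpl. unfold plus, opp, mult; simpl. ring. }
  assert (H0 : 0 <= RInt (fun x => (g x - c) ^ 2) a b).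
  { apply RInt_ge_0; [lra| eexists; exact H |]. intros; apply pow2_ge_0. }
  rewrite (is_RInt_unique _ _ _ _ H) in H0.
  assert (0 <= (1 - (b - a)) * c ^ 2) by (apply Rmult_le_pos; [lra|apply pow2_ge_0]).
  nra.
Qed.

Lemma sub_int (f : R -> R) a b :
  (forall x, continuous f x) -> (forall x, 0 <= f x) -> 0 <= a -> a <= b -> b <= 1 ->
  RInt f a b <= RInt f 0 1.
Proof.
  intros hc hp h0 hab h1.
  assert (E : forall u v, ex_RInt f u v) by (intros; apply (@ex_RInt_continuous R_CompleteNormedModule); auto).
  rewrite <- (RInt_Chasles f 0 a 1) by auto.
  rewrite <- (RInt_Chasles f a b 1) by auto.
  assert (0 <= RInt f 0 a) by (apply RInt_ge_0; auto).
  assert (0 <= RInt f b 1) by (apply RInt_ge_0; auto).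
  unfold plus; simpl. lra.
Qed.


Theorem lemma3p2 (w : R -> R)
  (hsmooth : smooth w) (hper : periodic1 w) (hpos : forall x, 0 < w x)
  (hmass : RInt w 0 1 = 1) :
  RInt (fun x => Qf (w x)) 0 1
    <= sqrt (RInt (fun x => (Derive w x) ^ 2 / w x) 0 1).
Proof.
  assert (hw : forall x, ex_derive w x) by (intro x; exact (hsmooth 0%nat x)).
  assert (hdw : forall x, ex_derive (Derive w) x) by (intro x; exact (hsmooth 1%nat x)).
  assert (hsq : forall x, 2 * sqrt (w x) <> 0).
  { intro x. assert (0 < sqrt (w x)) by (apply sqrt_lt_R0, hpos). lra. }
  assert (hcw : forall x, continuity_pt w x).
  { intro x. apply continuity_pt_filterlim. apply (ex_derive_continuous w x (hw x)). }
  destruct (continuity_ab_maj w 0 1 ltac:(lra) (fun c _ => hcw c)) as [x1 [hmax hx1]].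
  destruct (continuity_ab_min w 0 1 ltac:(lra) (fun c _ => hcw c)) as [x0 [hmin hx0]].
  set (W := w x1) in *. set (m := w x0) in *.
  assert (hm1 : m <= 1).
  { rewrite <- hmass.
    assert (RInt (fun _ => m) 0 1 <= RInt w 0 1).
    { apply RInt_le; [lra | apply ex_RInt_const | | ].
      apply (@ex_RInt_continuous R_CompleteNormedModule). intros; apply (@ex_derive_continuous R_AbsRing R_NormedModule), hw.
      intros; apply hmin; lra. }
    rewrite RInt_const in H. unfold scal in H; simpl in H. unfold mult in H; simpl in H. lra. }
  set (g := fun x => Derive w x / (2 * sqrt (w x))).
  assert (hder : forall x, is_derive (fun x => sqrt (w x)) x (g x)).
  { intro x. unfold g. auto_derive. repeat split; auto.
    unfold Rdiv; rewrite Rmult_1_l; reflexivity. }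
  assert (hgc : forall x, continuous g x).
  { intro x. apply (@ex_derive_continuous R_AbsRing R_NormedModule). unfold g. auto_derive. repeat split; auto. }
  assert (hg2c : forall x, continuous (fun x => g x ^ 2) x).
  { intro x. apply (@ex_derive_continuous R_AbsRing R_NormedModule). unfold g. auto_derive. repeat split; auto. }
  assert (hint := is_RInt_derive (fun x => sqrt (w x)) g x0 x1 (fun x _ => hder x) (fun x _ => hgc x)).
  set (h := fun x => Derive w x ^ 2 / w x).
  assert (hh : forall x, g x ^ 2 = scal (/4) (h x)).
  { intro x. unfold g, h, scal; simpl; unfold mult; simpl.
    assert (sqrt (w x) * sqrt (w x) = w x) by (apply sqrt_sqrt; apply Rlt_le, hpos).
    assert (0 < sqrt (w x)) by (apply sqrt_lt_R0, hpos).
    assert (w x <> 0) by (apply Rgt_not_eq, hpos).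
    set (s := sqrt (w x)) in *. rewrite <- H. field. lra. }
  assert (hexh : ex_RInt h 0 1).
  { apply (@ex_RInt_continuous R_CompleteNormedModule).
    intros. apply (@ex_derive_continuous R_AbsRing R_NormedModule). unfold h. auto_derive. repeat split; auto. apply Rgt_not_eq, hpos. }
  assert (hI : RInt (fun x => g x ^ 2) 0 1 = / 4 * RInt h 0 1).
  { apply is_RInt_unique. eapply is_RInt_ext; [intros; symmetry; apply hh| exact (is_RInt_scal _ 0 1 (/4) _ (RInt_correct _ _ _ hexh))]. }
  assert (hIpos : 0 <= RInt h 0 1).
  { apply RInt_ge_0; [lra | |].
    apply (@ex_RInt_continuous R_CompleteNormedModule).
    intros. apply (@ex_derive_continuous R_AbsRing R_NormedModule). unfold h. auto_derive. repeat split; auto. apply Rgt_not_eq, hpos.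
    intros. unfold h. apply Rmult_le_pos. apply pow2_ge_0. apply Rlt_le, Rinv_0_lt_compat, hpos. }
  assert (hkey : (sqrt W - sqrt m) ^ 2 <= / 4 * RInt h 0 1).
  { rewrite <- hI. unfold minus, plus, opp in hint; simpl in hint.
    destruct (Rle_dec x0 x1) as [hle | hlt].
    - eapply Rle_trans. apply (cs_lemma g x0 x1); [lra | lra | exact hint | ].
      apply (@ex_RInt_continuous R_CompleteNormedModule). intros; apply hg2c.
      apply sub_int; [auto | intros; apply pow2_ge_0 | lra | lra | lra].
    - apply is_RInt_swap in hint.
      replace ((sqrt W - sqrt m) ^ 2) with ((opp (sqrt W + - sqrt m)) ^ 2)
        by (unfold opp; simpl; ring).
      eapply Rle_trans. apply (cs_lemma g x1 x0); [lra | lra | exact hint | ].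
      apply (@ex_RInt_continuous R_CompleteNormedModule). intros; apply hg2c.
      apply sub_int; [auto | intros; apply pow2_ge_0 | lra | lra | lra]. }
  set (S := sqrt (RInt h 0 1)).
  assert (hS : S * S = RInt h 0 1) by (apply sqrt_sqrt; auto).
  assert (hS0 : 0 <= S) by apply sqrt_pos.
  assert (hsm : sqrt m <= 1).
  { rewrite <- sqrt_1. apply sqrt_le_1_alt. auto. }
  assert (hd : sqrt W - sqrt m <= S / 2).
  { rewrite <- hS in hkey. destruct (Rle_dec (sqrt W - sqrt m) (S / 2)) as [|hn]; auto.
    exfalso. assert (0 < (sqrt W - sqrt m - S/2) * (sqrt W - sqrt m + S/2)) by (apply Rmult_lt_0_compat; lra).
    nra. }
  assert (hW : sqrt W <= 1 + S / 2) by lra.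
  assert (hW0 : 0 < sqrt W) by (apply sqrt_lt_R0, hpos).
  assert (hlnW : ln W <= S).
  { assert (E : ln W = 2 * ln (sqrt W)).
    { replace W with (sqrt W * sqrt W) at 1 by (apply sqrt_sqrt, Rlt_le, hpos).
      rewrite ln_mult by auto. ring. }
    assert (ln (sqrt W) <= ln (1 + S / 2)) by (apply ln_le; auto).
    assert (ln (1 + S / 2) <= S / 2).
    { eapply Rle_trans; [apply ln_le; [lra | apply exp_ineq1_le] | rewrite ln_exp; lra]. }
    lra. }
  eapply Rle_trans; [| exact hlnW].
  assert (hexw : ex_RInt w 0 1).
  { apply (@ex_RInt_continuous R_CompleteNormedModule). intros; apply (@ex_derive_continuous R_AbsRing R_NormedModule), hw. }
  assert (H2 : is_RInt (fun x => w x * ln W - w x + 1) 0 1 (ln W)).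
  { assert (H' := is_RInt_plus _ _ 0 1 _ _ (is_RInt_minus _ _ 0 1 _ _ (is_RInt_scal _ 0 1 (ln W) _ (RInt_correct _ _ _ hexw)) (RInt_correct _ _ _ hexw)) (is_RInt_const 0 1 1)).
    rewrite hmass in H'.
    replace (ln W) with (plus (minus (scal (ln W) 1) 1) (scal (1 - 0) 1)).
    eapply is_RInt_ext; [|exact H'].
    intros x _. unfold plus, minus, scal, opp; simpl. unfold plus, opp, mult; simpl. ring.
    unfold plus, minus, scal, opp; simpl. unfold plus, opp, mult; simpl. ring. }
  rewrite <- (is_RInt_unique _ _ _ _ H2).
  apply RInt_le; [lra | | eexists; exact H2 | ].
  - apply (@ex_RInt_continuous R_CompleteNormedModule). intros. apply (@ex_derive_continuous R_AbsRing R_NormedModule).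
    unfold Qf. auto_derive. repeat split; auto.
  - intros x hx. unfold Qf.
    assert (ln (w x) <= ln W) by (apply ln_le; [apply hpos | apply hmax; lra]).
    assert (0 < w x) by apply hpos. nra.
Qed.
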